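(* Let $A,B\in\mathrm{SL}_2\mathbb{Z}$ be noncommuting, well oriented, with $2\le\mathrm{tr}(A)<\mathrm{tr}(B)$. If $[ab]<[b^2]$, then $[ab^k]<[b^{k+1}]$ for every $k\ge1$.
   Context: Words are finite strings over $\{a,b\}$; $\phi$ is the homomorphism with $\phi(a)=A,\phi(b)=B$, and $[w]=\mathrm{tr}(\phi(w))$. Fixed points are for the Möbius action on $\partial\mathcal{H}=\mathbb{P}^1\mathbb{R}$; $\alpha^\pm$ ($\beta^\pm$) are the attracting/repelling fixed points of $A$ ($B$), both equal to the unique fixed point if parabolic. With $\partial\mathcal{H}$ cyclically ordered and $[\alpha,\beta]$ the closed counterclockwise interval from $\alpha$ to $\beta$, let $I^+=\{\alpha^+\}$ if $\alpha^+=\beta^+$, and otherwise the one of $[\alpha^+,\beta^+],[\beta^+,\alpha^+]$ mapped into itself by both $A$ and $B$ (if it exists); define $I^-$ likewise with $A^{-1},B^{-1},\alpha^-,\beta^-$. The pair is coherently oriented if both exist, and well oriented if $A,B$ is coherently oriented but $A,B^{-1}$ is not. *)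

(* Defs.v *)
From mathcomp Require Import all_boot all_order all_algebra.
From mathcomp Require Import reals.
Set Implicit Arguments. Unset Strict Implicit. Unset Printing Implicit Defensive.
Import Order.TTheory GRing.Theory Num.Theory.
Local Open Scope ring_scope.

(* The boundary of the hyperbolic plane, P^1(R) = R u {oo}; None = oo. *)
Definition P1 (R : Type) := option R.

Definition mob (R : realType) (M : 'M[R]_2) (z : P1 R) : P1 R :=
  let a := M ord0 ord0 in let b := M ord0 ord_max in
  let c := M ord_max ord0 in let d := M ord_max ord_max in
  match z with
  | Some x => if c * x + d == 0 then None else Some ((a * x + b) / (c * x + d))
  | None => if c == 0 then None else Some (a / c)
  end.

(* Eigenvalue of M on the line represented by z (meaningful when z is fixed):
   M (x,1)^T = (c x + d) (x,1)^T, and M (1,0)^T = a (1,0)^T when c = 0.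
   The derivative of the Moebius map at a finite fixed point x is
   1/(c x + d)^2, so the fixed point is attracting iff this eigenvalue has
   modulus > 1. *)
Definition mfactor (R : realType) (M : 'M[R]_2) (z : P1 R) : R :=
  match z with
  | Some x => M ord_max ord0 * x + M ord_max ord_max
  | None => M ord0 ord0
  end.

Definition attracting (R : realType) (M : 'M[R]_2) (p : P1 R) : Prop :=
  mob M p = p /\ (`|\tr M| = 2 \/ 1 < `|mfactor M p|).

Definition repelling (R : realType) (M : 'M[R]_2) (p : P1 R) : Prop :=
  mob M p = p /\ (`|\tr M| = 2 \/ `|mfactor M p| < 1).

(* z lies in the closed counterclockwise interval [x, y] of P^1(R)
   (counterclockwise = increasing direction along R, passing through oo).
   Only used for x <> y. *)
Definition in_ccw (R : realType) (x y z : P1 R) : bool :=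
  match x, y with
  | Some a, Some b =>
      if a <= b then (match z with Some t => (a <= t) && (t <= b) | None => false end)
      else (match z with Some t => (a <= t) || (t <= b) | None => true end)
  | Some a, None => match z with Some t => a <= t | None => true end
  | None, Some b => match z with Some t => t <= b | None => true end
  | None, None => true
  end.

Definition stable (R : realType) (M N : 'M[R]_2) (x y : P1 R) : Prop :=
  forall z, in_ccw x y z -> in_ccw x y (mob M z) /\ in_ccw x y (mob N z).

Definition I_exists (R : realType) (M N : 'M[R]_2) (p q : P1 R) : Prop :=
  p = q \/ (p <> q /\ (stable M N p q \/ stable M N q p)).

Definition Iplus_exists (R : realType) (A B : 'M[R]_2) : Prop :=
  exists a b, attracting A a /\ attracting B b /\ I_exists A B a b.

Definition Iminus_exists (R : realType) (A B : 'M[R]_2) : Prop :=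
  exists a b, repelling A a /\ repelling B b /\ I_exists (invmx A) (invmx B) a b.

Definition coherently_oriented (R : realType) (A B : 'M[R]_2) : Prop :=
  Iplus_exists A B /\ Iminus_exists A B.

Definition well_oriented (R : realType) (A B : 'M[R]_2) : Prop :=
  coherently_oriented A B /\ ~ coherently_oriented A (invmx B).

Definition toR (R : realType) (M : 'M[int]_2) : 'M[R]_2 := map_mx (fun z => z%:~R) M.

(* Main.v *)
Require Import Defs.
From mathcomp Require Import all_boot all_order all_algebra.
From mathcomp Require Import reals.
From mathcomp Require Import ring lra zify.
Import Order.TTheory GRing.Theory Num.Theory.
Local Open Scope ring_scope.

Lemma det2 (B : 'M[int]_2) : \det B = B 0 0 * B 1 1 - B 0 1 * B 1 0.
Proof.
rewrite (expand_det_row B 0) !big_ord_recl big_ord0 /cofactor !det_mx11 !mxE /=.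
have e1 : lift (0 : 'I_2) 0 = 1 by apply/val_inj.
have e2 : lift (ord0 : 'I_2) 0 = 1 by apply/val_inj.
have e3 : lift (lift (ord0 : 'I_2) ord0) 0 = 0 by apply/val_inj.
have e4 : lift (ord0 : 'I_2) ord0 = 1 by apply/val_inj.
have e5 : (ord0 : 'I_2) = 0 by apply/val_inj.
rewrite ?e1 ?e2 ?e3 ?e4 ?e5 expr0 expr1 /=.
have e6 : lift (1 : 'I_2) 0 = 0 by apply/val_inj.
rewrite e6; ring.
Qed.

Lemma ch2 (B : 'M[int]_2) : \det B = 1 -> B * B = \tr B *: B - 1.
Proof.
rewrite det2 => dB; apply/matrixP => i j.
rewrite -mulmxE !mxE /mxtrace !big_ord_recl !big_ord0 ?mxE.
have e4 : lift (ord0 : 'I_2) ord0 = 1 by apply/val_inj.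
have e5 : (ord0 : 'I_2) = 0 by apply/val_inj.
rewrite ?e4 ?e5.
have E : forall n : 'I_2, n = 0 \/ n = 1.
  by case=> [[|[|n]] Hn] //; [left|right]; apply/val_inj.
case: (E i) => ->; case: (E j) => -> /=. all: rewrite ?mulr1n ?mulr0n; nia.
Qed.

Lemma recB (B X : 'M[int]_2) k : \det B = 1 ->
  \tr (X * B ^+ k.+2) = \tr B * \tr (X * B ^+ k.+1) - \tr (X * B ^+ k).
Proof.
move=> dB.
have -> : B ^+ k.+2 = \tr B *: B ^+ k.+1 - B ^+ k.
  by rewrite [B ^+ k.+2]exprSr [B ^+ k.+1]exprSr -mulrA ch2 // mulrBr mulr1 -scalerAr.
by rewrite mulrBr -scalerAr mxtraceD mxtraceZ raddfN.
Qed.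

Theorem lemma5p4 (R : realType) (A B : 'M[int]_2) :
  \det A = 1 -> \det B = 1 ->
  A *m B != B *m A ->
  well_oriented (toR R A) (toR R B) ->
  2 <= \tr A -> \tr A < \tr B ->
  \tr (A *m B) < \tr (B ^+ 2) ->
  forall k : nat, (1 <= k)%N -> \tr (A *m B ^+ k) < \tr (B ^+ k.+1).
Proof.
move=> _ dB _ _ hA hAB h1.
rewrite !mulmxE in h1 *.
set t := \tr B.
pose u k := \tr (B ^+ k.+1) - \tr (A * B ^+ k).
have uS : forall k, u k.+2 = t * u k.+1 - u k.
  move=> k; rewrite /u recB // -[B ^+ k.+3]mul1r recB // !mul1r /t; ring.
have u0 : u 0%N = t - \tr A by rewrite /u expr1 expr0 mulr1.
have u1 : 0 < u 1%N by rewrite /u expr1 subr_gt0.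
have inv : forall k, (0 < u k.+1) && (u k.+1 < u k.+2).
  elim=> [|k /andP[IH1 IH2]].
    rewrite u1 /= uS u0.
    have : 0 <= (t - 1) * (u 1%N - 1) by apply: mulr_ge0; rewrite /t; lia.
    move: u1; rewrite /t; generalize (u 1%N) => x; lia.
  rewrite (lt_trans IH1 IH2) /= [u k.+3]uS.
  have : 0 <= (t - 3) * u k.+2 by apply: mulr_ge0; rewrite /t; lia.
  move: IH1 IH2; rewrite /t; generalize (u k.+2) (u k.+1) => x y; lia.
case=> [//|k] _.
have /andP[H _] := inv k.
by rewrite -subr_gt0.
Qed.
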